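(* There exists a last-use opaque history that does not avoid cascading aborts; namely, some last-use opaque history contains transactions $T_i\neq T_j$ such that $T_j$ reads from $T_i$ via a read that occurs before $T_i$ commits.
   Context: Standard TM model: transactions with operations $\mathit{init}_i$, $\mathit{read}_i(x)$, $\mathit{write}_i(x,v)$, $\mathit{tryC}_i$, $\mathit{tryA}_i$; well-formed histories with unique writes; variables with domain $\mathbb{N}_0$, initial value $0$. $T_j$ reads from $T_i$ if $H|T_i$ contains $w_i(x,v)\to ok_i$ and $H|T_j$ contains $r_j(x)\to v$ for some $x,v$. A history avoids cascading aborts (ACA) iff for all $T_i\neq T_j$ such that $T_j$ reads from $T_i$, $T_i$ commits before that read. Committed/aborted/live, completion, equivalence, real-time order $\prec_H$, sequential histories as usual. Sequential $S'$ legal iff for each $x$, every read in $S'|x$ returning a value returns the latest preceding written value (or $0$). $\mathrm{vis}(S,T_i)$: subhistory of $S$ of $S|T_j$ for $j=i$ or $T_j$ committed with $T_j\prec_S T_i$; $T_i$ legal iff $\mathrm{vis}$ legal. Last-use opacity (relative to the program producing $H$): $T_j$ is decided on $x$ if $H|T_j$ contains a complete write on $x$ (response $\ne A_j$) after which no producible extension of $H$ has another write invocation by $T_j$ on $x$; $S\Downarrow_C T_j$: $T_j$'s $\mathit{init}_j$ and operations on its decided variables followed by $\mathit{tryC}_j\to C_j$. A last-use view of $T_i$ in sequential $S$ contains $S|T_j$ if $j=i$ or $T_j$ committed with $T_j\prec_S T_i$; if $T_j$ not committed, decided on some variable, $T_j\prec_S T_i$ and not $T_j\prec_H T_i$, contains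 either $S\Downarrow_C T_j$ or nothing; otherwise nothing. $T_i$ last-use legal iff some last-use view legal. Finite $H$ final-state last-use opaque iff some sequential $S$ equivalent to a completion of $H$ preserves $\prec_H$, committed transactions legal and others last-use legal; $H$ last-use opaque iff every finite prefix is final-state last-use opaque. *)

(* Defs.v *)
From Stdlib Require Import List Arith Bool.
Import ListNotations.

Inductive op : Type :=
| OInit
| ORead (x : nat)
| OWrite (x v : nat)
| OTryC
| OTryA.

Inductive resp : Type :=
| ROk
| RVal (v : nat)
| RC
| RA.

Inductive event : Type :=
| Inv (t : nat) (o : op)
| Res (t : nat) (r : resp).

Definition history := list event.

Definition tx (e : event) : nat := match e with Inv t _ => t | Res t _ => t end.

Definition proj (H : history) (i : nat) : history :=
  filter (fun e => Nat.eqb (tx e) i) H.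

Definition matches (o : op) (r : resp) : Prop :=
  match o with
  | OInit => r = ROk
  | ORead _ => (exists v, r = RVal v) \/ r = RA
  | OWrite _ _ => r = ROk \/ r = RA
  | OTryC => r = RC \/ r = RA
  | OTryA => r = RA
  end.

Fixpoint wf_body (l : history) : Prop :=
  match l with
  | [] => True
  | [Inv _ o] => o <> OInit
  | Inv _ o :: Res _ r :: rest =>
      o <> OInit /\ matches o r /\ ((r = RC \/ r = RA) -> rest = []) /\ wf_body rest
  | _ => False
  end.

Definition wf_tx (i : nat) (l : history) : Prop :=
  l = [] \/ l = [Inv i OInit] \/
  exists rest, l = Inv i OInit :: Res i ROk :: rest /\ wf_body rest.

Definition unique_writes (H : history) : Prop :=
  forall p q t t' x v,
    nth_error H p = Some (Inv t (OWrite x v)) ->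
    nth_error H q = Some (Inv t' (OWrite x v)) -> p = q.

Definition well_formed (H : history) : Prop :=
  (forall i, wf_tx i (proj H i)) /\ unique_writes H.

Definition in_hist (H : history) (i : nat) : Prop := proj H i <> [].
Definition committed (H : history) (i : nat) : Prop := In (Res i RC) H.
Definition aborted (H : history) (i : nat) : Prop := In (Res i RA) H.
Definition live (H : history) (i : nat) : Prop :=
  in_hist H i /\ ~ committed H i /\ ~ aborted H i.

Definition prec (H : history) (i j : nat) : Prop :=
  i <> j /\ (committed H i \/ aborted H i) /\ in_hist H j /\
  forall p q e e', nth_error H p = Some e -> tx e = i ->
                   nth_error H q = Some e' -> tx e' = j -> p < q.

Definition compl_tx (H E : history) (i : nat) : Prop :=
  (live H i /\
   ((exists l, proj H i = l ++ [Inv i OTryC] /\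
               (proj E i = [Res i RC] \/ proj E i = [Res i RA])) \/
    (exists l o, proj H i = l ++ [Inv i o] /\ o <> OTryC /\ proj E i = [Res i RA]) \/
    (exists l r, proj H i = l ++ [Res i r] /\ proj E i = [Inv i OTryA; Res i RA])))
  \/ (~ live H i /\ proj E i = []).

Definition completion (H C : history) : Prop :=
  exists E, C = H ++ E /\ forall i, compl_tx H E i.

Definition equivalent (H S : history) : Prop := forall i, proj H i = proj S i.

Definition sequential (S : history) : Prop :=
  forall p q r e1 e2 e3, p < q -> q < r ->
    nth_error S p = Some e1 -> nth_error S q = Some e2 -> nth_error S r = Some e3 ->
    tx e1 = tx e3 -> tx e2 = tx e1.

(** value of the latest complete write w(x,w) -> ok in l, or [acc] if none *)
Fixpoint lastw (x : nat) (l : history) (acc : nat) : nat :=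
  match l with
  | [] => acc
  | Inv t (OWrite y w) :: rest =>
      lastw x rest (match rest with
                    | Res t' ROk :: _ => if Nat.eqb y x && Nat.eqb t t' then w else acc
                    | _ => acc
                    end)
  | _ :: rest => lastw x rest acc
  end.

Definition legal (S : history) : Prop :=
  forall p t x v,
    nth_error S p = Some (Inv t (ORead x)) ->
    nth_error S (Nat.succ p) = Some (Res t (RVal v)) ->
    v = lastw x (firstn p S) 0.

Definition vis_legal (S : history) (i : nat) : Prop :=
  exists f : nat -> bool,
    (forall j, f j = true <-> (j = i \/ (committed S j /\ prec S j i))) /\
    legal (filter (fun e => f (tx e)) S).

(** A program is represented by the set of histories it can produce:
    prefix-closed and consisting of well-formed histories. *)
Definition program (P : history -> Prop) : Prop :=
  (forall H, P H -> well_formed H) /\ (forall H E, P (H ++ E) -> P H).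

Definition decided (P : history -> Prop) (H : history) (j x : nat) : Prop :=
  exists k v r,
    nth_error (proj H j) k = Some (Inv j (OWrite x v)) /\
    nth_error (proj H j) (Nat.succ k) = Some (Res j r) /\ r <> RA /\
    forall H', P H' -> (exists E, H' = H ++ E) ->
      forall k' w, k < k' -> nth_error (proj H' j) k' = Some (Inv j (OWrite x w)) -> False.

Definition keep (d : nat -> bool) (o : op) : bool :=
  match o with
  | OInit => true
  | ORead x => d x
  | OWrite x _ => d x
  | _ => false
  end.

Fixpoint keepops (d : nat -> bool) (l : history) : history :=
  match l with
  | Inv t o :: Res t' r :: rest =>
      (if keep d o then [Inv t o; Res t' r] else []) ++ keepops d rest
  | _ :: rest => keepops d rest
  | [] => []
  end.

(** S ⇓_C T_j, where [d] decides T_j's decided variables *)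
Definition downC (d : nat -> bool) (j : nat) (l : history) : history :=
  keepops d l ++ [Inv j OTryC; Res j RC].

Inductive vkind : Type := VFull | VCut | VNone.

Definition lu_legal (P : history -> Prop) (H S : history) (i : nat) : Prop :=
  exists (order : list nat) (g : nat -> vkind) (d : nat -> nat -> bool),
    NoDup order /\ S = concat (map (proj S) order) /\
    (forall j x, d j x = true <-> decided P H j x) /\
    (forall j, (j = i \/ (committed S j /\ prec S j i)) -> g j = VFull) /\
    (forall j, j <> i -> ~ committed S j -> (exists x, decided P H j x) ->
               prec S j i -> ~ prec H j i -> g j = VCut \/ g j = VNone) /\
    (forall j, ~ (j = i \/ (committed S j /\ prec S j i)) ->
               ~ (j <> i /\ ~ committed S j /\ (exists x, decided P H j x) /\
                  prec S j i /\ ~ prec H j i) -> g j = VNone) /\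
    legal (concat (map (fun j => match g j with
                                 | VFull => proj S j
                                 | VCut => downC (d j) j (proj S j)
                                 | VNone => []
                                 end) order)).

Definition final_state_lu_opaque (P : history -> Prop) (H : history) : Prop :=
  exists C S, completion H C /\ sequential S /\ equivalent C S /\
    (forall i j, prec H i j -> prec S i j) /\
    (forall i, committed S i -> vis_legal S i) /\
    (forall i, in_hist S i -> ~ committed S i -> lu_legal P H S i).

Definition lu_opaque (P : history -> Prop) (H : history) : Prop :=
  forall k, final_state_lu_opaque P (firstn k H).

Definition write_ok (H : history) (i x v : nat) : Prop :=
  exists k, nth_error (proj H i) k = Some (Inv i (OWrite x v)) /\
            nth_error (proj H i) (Nat.succ k) = Some (Res i ROk).

Definition read_at (H : history) (j x v q p : nat) : Prop :=
  q < p /\ nth_error H q = Some (Inv j (ORead x)) /\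
  nth_error H p = Some (Res j (RVal v)) /\
  forall m e, q < m -> m < p -> nth_error H m = Some e -> tx e <> j.

Definition ACA (H : history) : Prop :=
  forall i j x v q p, i <> j -> write_ok H i x v -> read_at H j x v q p ->
    exists c, c < p /\ nth_error H c = Some (Res i RC).

(* Main.v *)
Require Import Defs.
From Stdlib Require Import List Arith Bool Lia ClassicalEpsilon.
Import ListNotations.

Definition H0 : history :=
  [Inv 1 OInit; Res 1 ROk; Inv 1 (OWrite 0 1); Res 1 ROk;
   Inv 2 OInit; Res 2 ROk; Inv 2 (ORead 0); Res 2 (RVal 1)].

Definition P0 (L : history) : Prop := exists k, L = firstn k H0.

Lemma proj_Forall L i : Forall (fun e => tx e = i) (proj L i).
Proof.
  unfold proj. apply Forall_forall. intros e He.
  apply filter_In in He. destruct He as [_ He]. now apply Nat.eqb_eq.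
Qed.

Lemma nth_in_blocks (A B : history) a b p e :
  Forall (fun e => tx e = a) A -> Forall (fun e => tx e = b) B ->
  nth_error (A ++ B) p = Some e ->
  (p < length A /\ tx e = a) \/ (length A <= p /\ tx e = b).
Proof.
  intros FA FB Hn. destruct (Nat.lt_ge_cases p (length A)) as [Hl|Hl].
  - left. split; auto. rewrite nth_error_app1 in Hn by auto.
    apply nth_error_In in Hn. rewrite Forall_forall in FA. auto.
  - right. split; auto. rewrite nth_error_app2 in Hn by auto.
    apply nth_error_In in Hn. rewrite Forall_forall in FB. auto.
Qed.

Lemma seq_blocks (C : history) : sequential (proj C 1 ++ proj C 2).
Proof.
  intros p q r e1 e2 e3 Hpq Hqr H1 H2 H3 Heq.
  pose proof (proj_Forall C 1) as FA. pose proof (proj_Forall C 2) as FB.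
  destruct (nth_in_blocks _ _ _ _ _ _ FA FB H1) as [[? ?]|[? ?]];
  destruct (nth_in_blocks _ _ _ _ _ _ FA FB H2) as [[? ?]|[? ?]];
  destruct (nth_in_blocks _ _ _ _ _ _ FA FB H3) as [[? ?]|[? ?]];
  try congruence; lia.
Qed.

Lemma prec_blocks (C : history) :
  forall p q e e', nth_error (proj C 1 ++ proj C 2) p = Some e -> tx e = 1 ->
                   nth_error (proj C 1 ++ proj C 2) q = Some e' -> tx e' = 2 -> p < q.
Proof.
  intros p q e e' H1 T1 H2 T2.
  pose proof (proj_Forall C 1) as FA. pose proof (proj_Forall C 2) as FB.
  destruct (nth_in_blocks _ _ _ _ _ _ FA FB H1) as [[? ?]|[? ?]];
  destruct (nth_in_blocks _ _ _ _ _ _ FA FB H2) as [[? ?]|[? ?]];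
  try congruence; lia.
Qed.

Lemma proj_proj L i j : proj (proj L i) j = if Nat.eqb i j then proj L i else [].
Proof.
  unfold proj. induction L as [|e L IH]; simpl.
  - now destruct Nat.eqb.
  - destruct (Nat.eqb (tx e) i) eqn:E1; simpl.
    + apply Nat.eqb_eq in E1. rewrite E1. destruct (Nat.eqb i j); simpl; auto.
      f_equal; auto.
    + auto.
Qed.

Lemma proj_app L1 L2 i : proj (L1 ++ L2) i = proj L1 i ++ proj L2 i.
Proof. unfold proj. apply filter_app. Qed.

Lemma S_concat C : let S := proj C 1 ++ proj C 2 in S = concat (map (proj S) [1;2]).
Proof.
  simpl. rewrite !proj_app, !proj_proj. simpl. now rewrite !app_nil_r.
Qed.

Lemma In_firstn_H0 k e : In e (firstn k H0) -> In e H0.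
Proof.
  intros. rewrite <- (firstn_skipn k H0). apply in_or_app. auto.
Qed.

Lemma prec_prefix k i j : ~ prec (firstn k H0) i j.
Proof.
  intros [_ [[Hc|Hc] _]]; apply In_firstn_H0 in Hc; simpl in Hc;
  repeat (destruct Hc as [Hc|Hc]; [discriminate|]); contradiction.
Qed.

Definition ce (L : history) (i : nat) : history :=
  match rev (proj L i) with
  | [] => []
  | Inv _ _ :: _ => [Res i RA]
  | Res _ _ :: _ => [Inv i OTryA; Res i RA]
  end.
Definition compE L := ce L 1 ++ ce L 2.
Definition Cof L := L ++ compE L.
Definition Sof L := proj (Cof L) 1 ++ proj (Cof L) 2.

Definition dd (L : history) (j x : nat) : bool :=
  if excluded_middle_informative (decided P0 L j x) then true else false.

Lemma dd_spec L j x : dd L j x = true <-> decided P0 L j x.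
Proof. unfold dd. destruct excluded_middle_informative; split; congruence. Qed.

Lemma lu_simple L S i :
  S = concat (map (proj S) [1;2]) -> (forall j, ~ committed S j) ->
  (i = 1 \/ i = 2) -> legal (proj S i) -> lu_legal P0 L S i.
Proof.
  intros HS Hnc Hi Hl.
  exists [1;2], (fun j => if Nat.eqb j i then VFull else VNone), (dd L).
  split; [repeat constructor; simpl; intuition discriminate|].
  split; [exact HS|]. split; [apply dd_spec|].
  split; [intros j [->|[Hc _]]; [now rewrite Nat.eqb_refl | now exfalso; apply (Hnc j)]|].
  split; [intros j Hj _ _ _ _; right; now apply Nat.eqb_neq in Hj; rewrite Hj|].
  split; [intros j Hj _; assert (j <> i) by tauto; apply Nat.eqb_neq in H; now rewrite H|].
  destruct Hi as [->| ->]; simpl; rewrite ?app_nil_r; auto.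
Qed.

Ltac brute_legal :=
  match goal with |- legal ?X => let l := eval vm_compute in X in change (legal l) end;
  let p := fresh "p" in let H1 := fresh in let H2 := fresh in
  intros p ? ? ? H1 H2;
  do 14 (destruct p as [|p]; [ simpl in H1, H2; first [discriminate | (injection H1; injection H2; intros; subst; reflexivity)] | ]);
  simpl in H1; destruct p; discriminate.

Ltac not_comm := let j := fresh in let Hc := fresh in
  intros j Hc; unfold committed in Hc; vm_compute in Hc;
  repeat (destruct Hc as [Hc|Hc]; [discriminate|]); contradiction.

Ltac solve_compl :=
  let Hin := fresh in let Hc := fresh in
  first [ right; split; [ intros [Hin _]; apply Hin; reflexivity | reflexivity ]
        | left; split;
          [ split; [discriminate | split; unfold committed, aborted; vm_compute;
                     intro Hc; repeat (destruct Hc as [Hc|Hc]; [discriminate|]); contradiction]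
          | match goal with |- context [?X = _ ++ [Inv _ _]] =>
              first [ right; left; exists (removelast X); eexists; split;
                        [reflexivity | split; [discriminate | reflexivity]]
                    | right; right; exists (removelast X); eexists; split; reflexivity ]
            end ] ].

Lemma not_comm_aux S i : (forall j, ~ committed S j) -> ~ committed S i.
Proof. auto. Qed.

Ltac fs_simple :=
  match goal with |- final_state_lu_opaque _ ?L => exists (Cof L), (Sof L);
  split; [ exists (compE L); split; [reflexivity|];
           let i := fresh "i" in intro i; destruct i as [|[|[|i]]]; unfold compl_tx; solve_compl |];
  split; [apply seq_blocks|];
  split; [ let i := fresh "i" in intro i; destruct i as [|[|[|i]]]; reflexivity |];
  split; [ let Hp := fresh in intros ? ? Hp; exfalso; eapply prec_prefix; exact Hp |];
  split; [ let Hc := fresh in intros ? Hc; exfalso; revert Hc; apply not_comm_aux; not_comm |];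
  let i := fresh "i" in let Hin := fresh in let Hnc := fresh in intros i Hin Hnc; destruct i as [|[|[|i]]];
  try (exfalso; apply Hin; reflexivity);
  (apply lu_simple; [ apply S_concat | not_comm | auto | brute_legal ]) end.

Lemma fs_small k : k < 8 -> final_state_lu_opaque P0 (firstn k H0).
Proof.
  intros Hk.
  do 8 (destruct k as [|k]; [ fs_simple | ]). lia.
Qed.

Lemma dec10 : decided P0 H0 1 0.
Proof.
  exists 2, 1, ROk. split; [reflexivity|]. split; [reflexivity|]. split; [discriminate|].
  intros H' [m Hm] [E HE] k' w Hk Hn.
  assert (E = []) as ->.
  { destruct E as [|e E]; auto. exfalso.
    pose proof (length_firstn m H0) as H. rewrite <- Hm, HE, length_app in H.
    simpl in H. lia. }
  rewrite app_nil_r in HE. rewrite HE in Hn.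
  do 3 (destruct k' as [|k']; [lia|]). destruct k' as [|k']. { vm_compute in Hn. discriminate. }
  destruct k'; vm_compute in Hn; discriminate.
Qed.

Lemma lu2 : lu_legal P0 H0 (Sof H0) 2.
Proof.
  exists [1;2], (fun j => if Nat.eqb j 2 then VFull else if Nat.eqb j 1 then VCut else VNone), (dd H0).
  assert (Hnc : forall j, ~ committed (Sof H0) j) by not_comm.
  split; [repeat constructor; simpl; intuition discriminate|].
  split; [apply S_concat|]. split; [apply dd_spec|].
  split; [intros j [->|[Hc _]]; [reflexivity | now exfalso; apply (Hnc j)]|].
  split; [intros j Hj _ _ _ _; apply Nat.eqb_neq in Hj; rewrite Hj; destruct (Nat.eqb j 1); auto|].
  split.
  { intros j Hj Hcut. assert (j <> 2) by tauto. apply Nat.eqb_neq in H. rewrite H.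
    destruct (Nat.eqb j 1) eqn:E1; auto. apply Nat.eqb_eq in E1; subst. exfalso. apply Hcut.
    split; [discriminate|]. split; [apply Hnc|]. split; [exists 0; exact dec10|].
    split.
    - split; [discriminate|]. split; [right; unfold aborted; vm_compute; tauto|].
      split; [discriminate|]. apply prec_blocks.
    - intros [_ [[Hc|Hc] _]]; simpl in Hc;
      repeat (destruct Hc as [Hc|Hc]; [discriminate|]); contradiction. }
  assert (Hd : dd H0 1 0 = true) by (apply dd_spec; exact dec10).
  match goal with |- legal ?X =>
    assert (X = [Inv 1 OInit; Res 1 ROk; Inv 1 (OWrite 0 1); Res 1 ROk; Inv 1 OTryC; Res 1 RC;
                 Inv 2 OInit; Res 2 ROk; Inv 2 (ORead 0); Res 2 (RVal 1); Inv 2 OTryA; Res 2 RA]) as ->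
  end.
  { simpl. rewrite Hd. reflexivity. }
  brute_legal.
Qed.

Lemma fs_full : final_state_lu_opaque P0 H0.
Proof.
  exists (Cof H0), (Sof H0).
  split; [ exists (compE H0); split; [reflexivity|];
           let i := fresh "i" in intro i; destruct i as [|[|[|i]]]; unfold compl_tx; solve_compl |].
  split; [apply seq_blocks|].
  split; [ let i := fresh "i" in intro i; destruct i as [|[|[|i]]]; reflexivity |].
  split; [ intros i j Hp; exfalso; apply (prec_prefix 8 i j); exact Hp |].
  split; [ intros i Hc; exfalso; revert Hc; apply not_comm_aux; not_comm |].
  intros i Hin Hnc; destruct i as [|[|[|i]]];
  try (exfalso; apply Hin; reflexivity).
  - apply lu_simple; [ apply S_concat | not_comm | auto | brute_legal ].
  - apply lu2.
Qed.

Lemma lu_op : lu_opaque P0 H0.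
Proof.
  intro k. destruct (Nat.lt_ge_cases k 8).
  - now apply fs_small.
  - rewrite firstn_all2 by (simpl; lia). apply fs_full.
Qed.

Lemma w_pos p t x v : nth_error H0 p = Some (Inv t (OWrite x v)) -> p = 2.
Proof.
  intros Hp.
  do 8 (destruct p as [|p]; [vm_compute in Hp; first [discriminate | reflexivity] | ]).
  destruct p; vm_compute in Hp; discriminate.
Qed.

Lemma uw_H0 : unique_writes H0.
Proof.
  intros p q t t' x v Hp Hq. apply w_pos in Hp. apply w_pos in Hq. congruence.
Qed.

Ltac wf_tac i :=
  destruct i as [|[|[|i]]]; unfold wf_tx; vm_compute proj;
      first [ left; reflexivity | right; left; reflexivity
            | right; right; eexists; split; [reflexivity|];
              simpl; repeat split; try discriminate;
              try (let h := fresh in intros [h|h]; discriminate);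
              first [left; eexists; reflexivity | left; reflexivity] ].

Lemma wf_prefix k : well_formed (firstn k H0).
Proof.
  split.
  - intro i.
    assert (forall L, L = firstn k H0 -> wf_tx i (proj L i)) as Hg; [|now apply Hg].
    intros L HL.
    destruct (Nat.lt_ge_cases k 8) as [Hk|Hk];
    [ do 8 (destruct k as [|k]; [ subst L; vm_compute firstn; wf_tac i | ]); lia
    | rewrite firstn_all2 in HL by (simpl; lia); subst L; wf_tac i ].
  - intros p q t t' x v Hp Hq. rewrite nth_error_firstn in Hp, Hq.
    destruct (Nat.ltb p k), (Nat.ltb q k); try discriminate. eapply uw_H0; eauto.
Qed.

Lemma prog : program P0.
Proof.
  split.
  - intros L [k ->]. apply wf_prefix.
  - intros L E [k Hk]. exists (Nat.min (length L) k).
    rewrite <- firstn_firstn, <- Hk.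
    rewrite firstn_app, firstn_all, Nat.sub_diag. simpl. now rewrite app_nil_r.
Qed.

Lemma notACA : ~ ACA H0.
Proof.
  intro Ha.
  destruct (Ha 1 2 0 1 6 7) as [c [Hc Hn]].
  - discriminate.
  - exists 2. split; reflexivity.
  - split; [lia|]. split; [reflexivity|]. split; [reflexivity|]. intros; lia.
  - do 7 (destruct c as [|c]; [vm_compute in Hn; discriminate|]). lia.
Qed.

Theorem mainTheorem16 :
  exists (P : history -> Prop) (H : history),
    program P /\ P H /\ lu_opaque P H /\ ~ ACA H.
Proof.
  exists P0, H0. split; [apply prog|]. split; [exists 8; reflexivity|].
  split; [apply lu_op | apply notACA].
Qed.
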